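(* Let $X$ be a set of pointed Kripke models, $\Lambda$ a normal modal logic sound with respect to $X$, $D\subseteq\boldsymbol{\mathcal{L}}_{\Lambda}$ a $\Lambda$-representative descriptor for $X$, and $d_w\in\mathcal{D}_{(X,D)}$. Then every clean map $\boldsymbol{f}:X_{\boldsymbol{\mathcal{L}}_{\Lambda}}\to X_{\boldsymbol{\mathcal{L}}_{\Lambda}}$ is uniformly continuous in the metric space $(X_{\boldsymbol{\mathcal{L}}_{\Lambda}},d_w)$ (where $X_D=X_{\boldsymbol{\mathcal{L}}_{\Lambda}}$).
   Context: Signature: countable non-empty sets $\Phi$ (atoms) and $\mathcal{I}$ (indices); $\mathcal{L}$: $\varphi ::= \top\mid p\mid\neg\varphi\mid\varphi\wedge\varphi\mid\Box_i\varphi$. Kripke models $M=(\llbracket M\rrbracket,R,\llbracket\cdot\rrbracket)$ have countable non-empty state sets, relations $R_i$ ($i\in\mathcal{I}$) and atom valuation $\llbracket\cdot\rrbracket$; pointed models $Ms$; standard semantics. For a normal modal logic $\Lambda$, $\boldsymbol{\varphi}$ is the class of formulas $\Lambda$-provably equivalent to $\varphi$, and $\boldsymbol{\mathcal{L}}_{\Lambda}=\{\boldsymbol{\varphi}:\varphi\in\mathcal{L}\}$. A descriptor for $X$ is a set $D\subseteq\boldsymbol{\mathcal{L}}_{\Lambda}$; $X_D=\{\boldsymbol{x}_D:x\in X\}$ with $\boldsymbol{x}_D=\{y\in X:\forall\boldsymbol{\varphi}\in D,\ y\models\varphi\iff x\models\varphi\}$. $D$ is $\Lambda$-representative if for every $\varphi\in\mathcal{L}$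 there is $\{\boldsymbol{\psi}_i\}_{i\in I}\subseteq D$ such that for every $J\subseteq I$ the set $\{\psi_i\}_{i\in J}\cup\{\neg\psi_i\}_{i\in I\setminus J}$ $\Lambda$-entails $\varphi$ or $\neg\varphi$. With an enumeration $\boldsymbol{\varphi}_1,\boldsymbol{\varphi}_2,\dots$ of $D$, a weight function is $w:D\to\mathbb{R}_{>0}$ with $\sum_k w(\boldsymbol{\varphi}_k)<\infty$, and $d_w(\boldsymbol{x},\boldsymbol{y})=\sum_k w(\boldsymbol{\varphi}_k)d_k(\boldsymbol{x},\boldsymbol{y})$ where $d_k=0$ if $x,y$ agree on $\varphi_k$ and $1$ otherwise; $\mathcal{D}_{(X,D)}$ is the set of all such $d_w$. A multi-pointed action model is $\Sigma\Gamma=(\llbracket\Sigma\rrbracket,\mathsf{R},pre,post,\Gamma)$ with $\llbracket\Sigma\rrbracket$ a countable non-empty set of actions, $\mathsf{R}_i\subseteq\llbracket\Sigma\rrbracket^2$ for $i\in\mathcal{I}$, $pre:\llbracket\Sigma\rrbracket\to\mathcal{L}$, $post:\llbracket\Sigma\rrbracket\to\mathcal{L}$ with each $post(\sigma)$ either $\top$ or a conjunction of literals over $\Phi$, and $\emptyset\neq\Gamma\subseteq\llbracket\Sigma\rrbracket$. It is precondition finite if $\{\boldsymbol{pre(\sigma)}:\sigma\in\llbracket\Sigma\rrbracket\}$ is finite; exhaustive over $X$ if every $x\in X$ satisfies $pre(\sigma)$ for some $\sigma\in\Gamma$; deterministic over $X$ if every $x\in X$ satisfies $pre(\sigma)\wedge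 pre(\sigma')\to\bot$ for all $\sigma\neq\sigma'\in\Gamma$. For such $\Sigma\Gamma$ and $Ms\in X$, the product update $Ms\otimes\Sigma\Gamma$ has states $\{(s,\sigma):Ms\models pre(\sigma)\}$, relations $R'_i=\{((s,\sigma),(t,\tau)):(s,t)\in R_i,(\sigma,\tau)\in\mathsf{R}_i\}$, valuation $\llbracket p\rrbracket'=\{(s,\sigma):s\in\llbracket p\rrbracket, post(\sigma)\not\models\neg p\}\cup\{(s,\sigma):post(\sigma)\models p\}$, and designated state $(s,\sigma)$ for the $\sigma\in\Gamma$ with $Ms\models pre(\sigma)$. $\Sigma\Gamma$ is closing over $X$ if $x\otimes\Sigma\Gamma\in X$ for all $x\in X$. A map $\boldsymbol{f}:X_{\boldsymbol{\mathcal{L}}_{\Lambda}}\to X_{\boldsymbol{\mathcal{L}}_{\Lambda}}$ is clean if there is a precondition finite multi-pointed action model $\Sigma\Gamma$ closing, deterministic and exhaustive over $X$ with $\boldsymbol{f}(\boldsymbol{x})=\boldsymbol{y}$ iff $x\otimes\Sigma\Gamma\in\boldsymbol{y}$. *)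

(* Defs.v *)
From Stdlib Require Import Reals List ClassicalDescription.
From Coquelicot Require Import Coquelicot.
Set Implicit Arguments.
Open Scope R_scope.

Section Logic.
Variables (At Ag : Type).

Definition countable (T : Type) : Prop :=
  exists g : T -> nat, forall a b, g a = g b -> a = b.

Inductive form : Type :=
| Top : form
| Var : At -> form
| Neg : form -> form
| And : form -> form -> form
| Box : Ag -> form -> form.

Definition Imp (a b : form) : form := Neg (And a (Neg b)).
Definition Iff (a b : form) : form := And (Imp a b) (Imp b a).
Definition Bot : form := Neg Top.

Record model : Type := Model {
  st : Type;
  rel : Ag -> st -> st -> Prop;
  val : At -> st -> Prop }.

Record pmodel : Type := PModel { pm : model; pt : st pm }.

Fixpoint sat (M : model) (s : st M) (phi : form) : Prop :=
  match phi with
  | Top => True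
  | Var p => val M p s
  | Neg a => ~ sat M s a
  | And a b => sat M s a /\ sat M s b
  | Box i a => forall t, rel M i s t -> sat M t a
  end.

Definition psat (x : pmodel) (phi : form) : Prop := sat (pm x) (pt x) phi.

(* Propositional (boolean) evaluation, treating atoms and boxed formulas
   as propositional variables. *)
Fixpoint peval (v : form -> bool) (phi : form) : bool :=
  match phi with
  | Top => true
  | Var p => v (Var p)
  | Neg a => negb (peval v a)
  | And a b => andb (peval v a) (peval v b)
  | Box i a => v (Box i a)
  end.

Definition ptaut (phi : form) : Prop := forall v, peval v phi = true.

Definition pent (phi psi : form) : Prop :=
  forall v, peval v phi = true -> peval v psi = true.

Fixpoint subst (s : At -> form) (phi : form) : form :=
  match phi with
  | Top => Top
  | Var p => s p
  | Neg a => Neg (subst s a)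
  | And a b => And (subst s a) (subst s b)
  | Box i a => Box i (subst s a)
  end.

Definition normal_logic (L : form -> Prop) : Prop :=
  (forall phi, ptaut phi -> L phi) /\
  (forall i a b, L (Imp (Box i (Imp a b)) (Imp (Box i a) (Box i b)))) /\
  (forall a b, L a -> L (Imp a b) -> L b) /\
  (forall i a, L a -> L (Box i a)) /\
  (forall s a, L a -> L (subst s a)).

Definition lequiv (L : form -> Prop) (a b : form) : Prop := L (Iff a b).

Definition sound (L : form -> Prop) (X : pmodel -> Prop) : Prop :=
  forall phi, L phi -> forall x, X x -> psat x phi.

Fixpoint conj (l : list form) : form :=
  match l with nil => Top | a :: l' => And a (conj l') end.

Definition lentails (L : form -> Prop) (G : form -> Prop) (phi : form) : Prop :=
  exists l : list form, (forall a, In a l -> G a) /\ L (Imp (conj l) phi).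

(* A descriptor (a set of L-classes) is encoded by a predicate D on formulas
   closed under L-equivalence (phi in D <-> class of phi in D). *)
Definition class_closed (L : form -> Prop) (D : form -> Prop) : Prop :=
  forall a b, D a -> lequiv L a b -> D b.

Definition representative (L : form -> Prop) (D : form -> Prop) : Prop :=
  forall phi, exists (I : Type) (psi : I -> form),
    (forall i, D (psi i)) /\
    forall J : I -> Prop,
      let G := fun c => (exists i, J i /\ c = psi i) \/
                        (exists i, ~ J i /\ c = Neg (psi i)) in
      lentails L G phi \/ lentails L G (Neg phi).

(* e enumerates the classes of D without repetition (None = no entry, to allow
   finite D). *)
Definition enumeration (L : form -> Prop) (D : form -> Prop)
    (e : nat -> option form) : Prop :=
  (forall k a, e k = Some a -> D a) /\
  (forall a, D a -> exists k b, e k = Some b /\ lequiv L a b) /\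
  (forall k l a b, e k = Some a -> e l = Some b -> lequiv L a b -> k = l).

Definition weight (L : form -> Prop) (D : form -> Prop)
    (e : nat -> option form) (w : form -> R) : Prop :=
  (forall a, D a -> 0 < w a) /\
  (forall a b, D a -> lequiv L a b -> w a = w b) /\
  ex_series (fun k => match e k with Some a => w a | None => 0 end).

Definition dk (x y : pmodel) (a : form) : R :=
  if excluded_middle_informative (psat x a <-> psat y a) then 0 else 1.

(* d_w on representatives *)
Definition dw (e : nat -> option form) (w : form -> R) (x y : pmodel) : R :=
  Series (fun k => match e k with Some a => w a * dk x y a | None => 0 end).

Definition cls (X : pmodel -> Prop) (x : pmodel) : pmodel -> Prop :=
  fun y => X y /\ forall phi, psat y phi <-> psat x phi.

Definition XL (X : pmodel -> Prop) (c : pmodel -> Prop) : Prop :=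
  exists x, X x /\ c = cls X x.

Inductive literal : form -> Prop :=
| lit_pos : forall p, literal (Var p)
| lit_neg : forall p, literal (Neg (Var p)).

Inductive conj_lits : form -> Prop :=
| cl_lit : forall a, literal a -> conj_lits a
| cl_and : forall a b, conj_lits a -> conj_lits b -> conj_lits (And a b).

Record amodel : Type := AModel {
  act : Type;
  arel : Ag -> act -> act -> Prop;
  pre : act -> form;
  post : act -> form;
  des : act -> Prop }.

Definition wf_amodel (A : amodel) : Prop :=
  countable (act A) /\
  (forall s, post A s = Top \/ conj_lits (post A s)) /\
  (exists s, des A s).

Definition precondition_finite (L : form -> Prop) (A : amodel) : Prop :=
  exists l : list form, forall s, exists a, In a l /\ lequiv L (pre A s) a.

Definition exhaustive (X : pmodel -> Prop) (A : amodel) : Prop :=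
  forall x, X x -> exists s, des A s /\ psat x (pre A s).

Definition deterministic (X : pmodel -> Prop) (A : amodel) : Prop :=
  forall x, X x -> forall s s', des A s -> des A s' -> s <> s' ->
    ~ (psat x (pre A s) /\ psat x (pre A s')).

Definition upd (x : pmodel) (A : amodel) (s : act A)
    (h : psat x (pre A s)) : pmodel :=
  let M := pm x in
  let S := {p : st M * act A | sat M (fst p) (pre A (snd p))} in
  {| pm := {| st := S;
              rel := fun i (a b : S) =>
                rel M i (fst (proj1_sig a)) (fst (proj1_sig b)) /\
                arel A i (snd (proj1_sig a)) (snd (proj1_sig b));
              val := fun p (a : S) =>
                (val M p (fst (proj1_sig a)) /\
                 ~ pent (post A (snd (proj1_sig a))) (Neg (Var p))) \/
                pent (post A (snd (proj1_sig a))) (Var p) |};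
     pt := exist (fun p : st M * act A => sat M (fst p) (pre A (snd p)))
                 (pt x, s) h |}.

Definition closing (X : pmodel -> Prop) (A : amodel) : Prop :=
  forall x s (h : psat x (pre A s)), X x -> des A s -> X (upd x A s h).

Definition clean (L : form -> Prop) (X : pmodel -> Prop)
    (f : (pmodel -> Prop) -> (pmodel -> Prop)) : Prop :=
  exists A : amodel,
    wf_amodel A /\ precondition_finite L A /\ closing X A /\
    deterministic X A /\ exhaustive X A /\
    forall x s (h : psat x (pre A s)) y, X x -> des A s -> X y ->
      (f (cls X x) = cls X y <-> cls X y (upd x A s h)).

End Logic.

(* Main.v *)
Require Import Defs.
From Stdlib Require Import Reals List Classical ClassicalDescription Lia Lra.
From Coquelicot Require Import Coquelicot.
Open Scope R_scope.


Lemma sat_Imp {At Ag} {M : model At Ag} {t a b} :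
  sat M t (Imp a b) <-> (sat M t a -> sat M t b).
Proof. unfold Imp. cbn [sat]. split; intros H.
  - intros Ha. apply NNPP; intro Hb; apply H; auto.
  - intros [Ha Hb]; auto. Qed.

Lemma sat_Iff {At Ag} {M : model At Ag} {t a b} :
  sat M t (Iff a b) <-> (sat M t a <-> sat M t b).
Proof. unfold Iff. cbn [sat]. rewrite !sat_Imp. tauto. Qed.

Lemma sat_conj {At Ag} {M : model At Ag} {t l} :
  sat M t (conj l) <-> forall c, In c l -> sat M t c.
Proof. induction l as [|a l IH]; cbn [conj sat].
  - split; [intros _ c []| intros; exact I].
  - rewrite IH. split.
    + intros [Ha Hl] c [<-|Hc]; auto.
    + intros H; split; [apply H; left; auto | intros c Hc; apply H; right; auto]. Qed.

Definition good {At Ag} (L : form At Ag -> Prop) (M : model At Ag) (t : st M) :=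
  forall th, L th -> sat M t th.

Lemma good_succ {At Ag L} {M : model At Ag} {t u i} :
  normal_logic L -> good L M t -> rel M i t u -> good L M u.
Proof. intros (_&_&_&Hn&_) Hg Hr th Hth. exact (Hg _ (Hn i th Hth) u Hr). Qed.

Lemma good_equiv {At Ag L} {M : model At Ag} {t a b} :
  good L M t -> lequiv L a b -> (sat M t a <-> sat M t b).
Proof. intros Hg He. apply sat_Iff. apply Hg. exact He. Qed.

Lemma good_pt {At Ag L} {X : pmodel At Ag -> Prop} {x} :
  sound L X -> X x -> good L (pm x) (pt x).
Proof. intros Hs Hx th Hth. exact (Hs th Hth x Hx). Qed.

Lemma sound_equiv {At Ag L} {X : pmodel At Ag -> Prop} {x a b} :
  sound L X -> X x -> lequiv L a b -> (psat x a <-> psat x b).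
Proof. intros Hs Hx He. exact (good_equiv (good_pt Hs Hx) He). Qed.

Definition updM {At Ag} (M : model At Ag) (A : amodel At Ag) : model At Ag :=
  let S := {p : st M * act A | sat M (fst p) (Defs.pre A (snd p))} in
  {| st := S;
     rel := fun i (a b : S) =>
       rel M i (fst (proj1_sig a)) (fst (proj1_sig b)) /\
       arel A i (snd (proj1_sig a)) (snd (proj1_sig b));
     val := fun p (a : S) =>
       (val M p (fst (proj1_sig a)) /\
        ~ pent (post A (snd (proj1_sig a))) (Neg (Defs.Var _ p))) \/
       pent (post A (snd (proj1_sig a))) (Defs.Var _ p) |}.

Definition GP {At Ag} (L : form At Ag -> Prop) (A : amodel At Ag) phi tau chi :=
  forall (M : model At Ag) (t : st M) (h : sat M t (Defs.pre A tau)), good L M t ->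
    (sat (updM M A) (exist (fun p : st M * act A => sat M (fst p) (Defs.pre A (snd p))) (t, tau) h) phi
     <-> sat M t chi).

Fixpoint powerlist {T} (xs : list T) : list (list T) :=
  match xs with
  | nil => nil :: nil
  | x :: xs' => map (cons x) (powerlist xs') ++ powerlist xs'
  end.

Lemma filter_powerlist T (f : T -> bool) xs : In (filter f xs) (powerlist xs).
Proof. induction xs as [|a xs IH]; simpl. left; auto.
  destruct (f a); apply in_or_app; [left; apply in_map | right]; auto. Qed.

Lemma trans {At Ag L} {A : amodel At Ag} (hL : normal_logic L) {l : list (form At Ag)}
  (pl : forall s, exists a, In a l /\ lequiv L (Defs.pre A s) a) phi :
  exists F, forall tau, exists chi, In chi F /\ GP L A phi tau chi.
Proof.
  induction phi as [| p | phi IH | phi1 IH1 phi2 IH2 | i phi IH].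
  - exists ((Top _ _) :: nil). intro tau. exists (Top _ _). split; [left; auto|].
    intros M t h _. simpl. tauto.
  - exists ((Top _ _) :: Neg (Top _ _) :: Defs.Var _ p :: nil). intro tau.
    destruct (classic (pent (post A tau) (Defs.Var _ p))) as [H1|H1].
    + exists (Top _ _). split; [simpl; auto|]. intros M t h _. simpl. tauto.
    + destruct (classic (pent (post A tau) (Neg (Defs.Var _ p)))) as [H2|H2].
      * exists (Neg (Top _ _)). split; [simpl; auto|]. intros M t h _. simpl. tauto.
      * exists (Defs.Var _ p). split; [simpl; auto|]. intros M t h _. simpl. tauto.
  - destruct IH as [F HF]. exists (map (@Neg At Ag) F). intro tau.
    destruct (HF tau) as [chi [Hin Hg]]. exists (Neg chi). split; [apply in_map; auto|].
    intros M t h Hgd. specialize (Hg M t h Hgd). cbn [sat]. tauto.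
  - destruct IH1 as [F1 HF1]. destruct IH2 as [F2 HF2].
    exists (map (fun pr => Defs.And (fst pr) (snd pr)) (list_prod F1 F2)). intro tau.
    destruct (HF1 tau) as [c1 [Hin1 Hg1]]. destruct (HF2 tau) as [c2 [Hin2 Hg2]].
    exists (Defs.And c1 c2). split.
    + apply (in_map (fun pr => Defs.And (fst pr) (snd pr)) _ (c1, c2)). apply in_prod; auto.
    + intros M t h Hgd. specialize (Hg1 M t h Hgd). specialize (Hg2 M t h Hgd).
      cbn [sat]. tauto.
  - destruct IH as [F HF].
    set (pairs := list_prod l F).
    set (Q := fun tau (pr : form At Ag * form At Ag) =>
      exists u, arel A i tau u /\ lequiv L (Defs.pre A u) (fst pr) /\ GP L A phi u (snd pr)).
    set (bx := fun S : list (form At Ag * form At Ag) =>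
      conj (map (fun pr => Box i (Imp (fst pr) (snd pr))) S)).
    exists (map bx (powerlist pairs)). intro tau.
    set (fb := fun pr => if excluded_middle_informative (Q tau pr) then true else false).
    exists (bx (filter fb pairs)). split.
    { apply in_map. apply filter_powerlist. }
    intros M t h Hgd. unfold bx. rewrite sat_conj. cbn [sat]. split.
    + intros Hbox c Hc. apply in_map_iff in Hc. destruct Hc as [[a chi] [<- Hc]].
      apply filter_In in Hc. destruct Hc as [_ Hq]. unfold fb in Hq.
      destruct (excluded_middle_informative (Q tau (a, chi))) as [Hq'|]; [|discriminate].
      destruct Hq' as [u [Har [Heq Hg]]]. simpl in Heq, Hg.
      cbn [sat]. intros t' Hr. apply sat_Imp. intros Ha.
      assert (Hgd' : good L M t') by (exact (good_succ hL Hgd Hr)).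
      assert (h' : sat M t' (Defs.pre A u)) by (apply (good_equiv Hgd' Heq); exact Ha).
      apply (Hg M t' h' Hgd').
      apply (Hbox (exist _ (t', u) h')). simpl. auto.
    + intros Hc [[t' u] h'] [Hr Har]. simpl in Hr, Har, h'.
      assert (Hgd' : good L M t') by (exact (good_succ hL Hgd Hr)).
      destruct (pl u) as [a [Ha Heq]]. destruct (HF u) as [chi [Hin Hg]].
      assert (Hin2 : In (a, chi) (filter fb pairs)).
      { apply filter_In. split. apply in_prod; auto.
        unfold fb. destruct (excluded_middle_informative (Q tau (a, chi))) as [|Hn]; auto.
        exfalso; apply Hn. exists u. simpl. auto. }
      specialize (Hc (Box i (Imp a chi))
        (in_map (fun pr => Box i (Imp (fst pr) (snd pr))) _ _ Hin2)).
      cbn [sat] in Hc. specialize (Hc t' Hr). rewrite sat_Imp in Hc.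
      apply (Hg M t' h' Hgd'). apply Hc. apply (good_equiv Hgd' Heq). exact h'.
Qed.

Lemma upd_det {At Ag L} {X : pmodel At Ag -> Prop} {A : amodel At Ag}
  (hL : normal_logic L) (hs : sound L X) {l : list (form At Ag)}
  (pl : forall s, exists a, In a l /\ lequiv L (Defs.pre A s) a)
  (hdet : deterministic X A) phi :
  exists Psi : list (form At Ag), forall x y s s' (h : psat x (Defs.pre A s)) (h' : psat y (Defs.pre A s')),
    X x -> X y -> des A s -> des A s' ->
    (forall ps, In ps Psi -> (psat x ps <-> psat y ps)) ->
    (psat (upd x A s h) phi <-> psat (upd y A s' h') phi).
Proof.
  destruct (trans hL pl phi) as [F HF]. exists (l ++ F).
  intros x y s s' h h' Hx Hy Hs Hs' Hag.
  assert (s = s').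
  { destruct (classic (s = s')) as [|Hne]; auto. exfalso.
    apply (hdet y Hy s s' Hs Hs' Hne). split; auto.
    destruct (pl s) as [a [Ha Heq]].
    apply (sound_equiv hs Hy Heq). apply Hag. apply in_or_app; left; auto.
    apply (sound_equiv hs Hx Heq). exact h. }
  subst s'. destruct (HF s) as [chi [Hin Hg]].
  pose proof (Hg (pm x) (pt x) h (good_pt hs Hx)) as H1.
  pose proof (Hg (pm y) (pt y) h' (good_pt hs Hy)) as H2.
  transitivity (psat x chi). exact H1.
  transitivity (psat y chi). apply Hag. apply in_or_app; right; auto.
  symmetry. exact H2.
Qed.

Definition mtch {At Ag} (e : nat -> option (form At Ag)) (sg : nat -> bool) m x :=
  forall k b, (k < m)%nat -> e k = Some b -> (psat x b <-> sg k = true).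
Definition agr {At Ag} (e : nat -> option (form At Ag)) n x y :=
  forall k b, (k < n)%nat -> e k = Some b -> (psat x b <-> psat y b).
Definition Ext {At Ag} (X : pmodel At Ag -> Prop) e psi sg m :=
  forall n, exists x y, X x /\ X y /\ mtch e sg m x /\ mtch e sg m y /\ agr e n x y /\
    ~ (psat x psi <-> psat y psi).
Definition updf (sg : nat -> bool) m (b : bool) := fun k => if Nat.eqb k m then b else sg k.

Fixpoint sq {At Ag} (X : pmodel At Ag -> Prop) e psi m : nat -> bool :=
  match m with
  | O => fun _ => false
  | S m' => if excluded_middle_informative (Ext X e psi (updf (sq X e psi m') m' true) (S m'))
            then updf (sq X e psi m') m' true else updf (sq X e psi m') m' false
  end.

Lemma sq_stable {At Ag} (X : pmodel At Ag -> Prop) e psi m k :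
  (k < m)%nat -> sq X e psi (S m) k = sq X e psi m k.
Proof. intros Hk. simpl. destruct (excluded_middle_informative _); unfold updf;
  destruct (Nat.eqb_spec k m); auto; lia. Qed.

Lemma sq_stable2 {At Ag} (X : pmodel At Ag -> Prop) e psi k m :
  (k < m)%nat -> sq X e psi m k = sq X e psi (S k) k.
Proof. induction m as [|m IH]; intros Hk; [lia|].
  destruct (Nat.eq_dec k m) as [->|Hne]; auto.
  rewrite sq_stable by lia. apply IH; lia. Qed.

Lemma agr_mono {At Ag} (e : nat -> option (form At Ag)) n n' x y :
  agr e n' x y -> (n <= n')%nat -> agr e n x y.
Proof. intros H Hn k b Hk. apply H; lia. Qed.

Lemma mtch_ext {At Ag} (e : nat -> option (form At Ag)) sg m x v :
  mtch e sg m x -> (forall b, e m = Some b -> (psat x b <-> v = true)) ->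
  mtch e (updf sg m v) (S m) x.
Proof. intros H1 H2 k b Hk He. unfold updf. destruct (Nat.eqb_spec k m).
  subst; auto. apply H1; auto; lia. Qed.

Lemma Ext_sq {At Ag} {X : pmodel At Ag -> Prop} {e psi} :
  Ext X e psi (sq X e psi 0) 0 -> forall m, Ext X e psi (sq X e psi m) m.
Proof.
  intros H0 m. induction m as [|m IH]; auto.
  simpl. destruct (excluded_middle_informative _) as [HT|HT]; auto.
  intros n. apply NNPP. intros Hn1.
  apply not_all_ex_not in HT. destruct HT as [n2 Hn2].
  destruct (IH (max (max n n2) (S m))) as (x & y & Hx & Hy & Mx & My & Ag' & Hd).
  assert (Hxy : forall b, e m = Some b -> (psat x b <-> psat y b)).
  { intros b Hb. apply Ag' with m; auto; lia. }
  destruct (classic (exists b, e m = Some b /\ psat x b)) as [[b [Hb Hxb]]|Hnb].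
  - apply Hn2. exists x, y. split; [auto|]. split; [auto|]. split; [|split; [|split; [|auto]]].
    + apply mtch_ext; auto. intros b' Hb'. rewrite Hb in Hb'. injection Hb' as <-. tauto.
    + apply mtch_ext; auto. intros b' Hb'. rewrite Hb in Hb'. injection Hb' as <-.
      rewrite <- Hxy by auto. tauto.
    + apply agr_mono with (max (max n n2) (S m)); auto; lia.
  - apply Hn1. exists x, y. split; [auto|]. split; [auto|]. split; [|split; [|split; [|auto]]].
    + apply mtch_ext; auto. intros b' Hb'. split; [intros Hx'; exfalso; apply Hnb; eauto|discriminate].
    + apply mtch_ext; auto. intros b' Hb'. rewrite <- Hxy by auto.
      split; [intros Hx'; exfalso; apply Hnb; eauto|discriminate].
    + apply agr_mono with (max (max n n2) (S m)); auto; lia.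
Qed.

Lemma bound_list {T} (l : list T) (R : T -> nat -> Prop) :
  (forall c, In c l -> exists k, R c k) -> exists m, forall c, In c l -> exists k, (k < m)%nat /\ R c k.
Proof.
  induction l as [|a l IH]; intros H.
  - exists O. intros c [].
  - destruct (H a (or_introl eq_refl)) as [k0 Hk0].
    destruct IH as [m' Hm']. { intros c Hc. apply H. right; auto. }
    exists (max (S k0) m'). intros c [<-|Hc].
    + exists k0. split; auto. lia.
    + destruct (Hm' c Hc) as [k [Hk HR]]. exists k. split; auto. lia.
Qed.

Lemma finite_det {At Ag} L (X : pmodel At Ag -> Prop) D e
  (hs : sound L X) (hD : representative L D) (he : enumeration L D e) psi :
  exists n, forall x y, X x -> X y -> agr e n x y -> (psat x psi <-> psat y psi).
Proof.
  destruct (classic (exists n, forall x y, X x -> X y -> agr e n x y -> (psat x psi <-> psat y psi)))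
    as [|Hno]; auto. exfalso.
  assert (H0 : Ext X e psi (sq X e psi 0) 0).
  { intros n. apply NNPP. intros Hc. apply Hno. exists n. intros x y Hx Hy Hag.
    apply NNPP. intros Hd. apply Hc. exists x, y. split; [auto|]. split; [auto|].
    split; [intros k b Hk; lia|]. split; [intros k b Hk; lia|]. auto. }
  pose proof (Ext_sq H0) as HE.
  destruct (hD psi) as [I [ps [HDps Hdec]]].
  set (Jb := fun k => sq X e psi (S k) k).
  set (J := fun i => exists k b, e k = Some b /\ lequiv L (ps i) b /\ Jb k = true).
  specialize (Hdec J). cbv zeta in Hdec.
  set (R := fun c k => exists b, e k = Some b /\
     ((exists i, c = ps i /\ lequiv L (ps i) b /\ Jb k = true) \/
      (exists i, c = Neg (ps i) /\ lequiv L (ps i) b /\ Jb k = false))).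
  assert (Key : forall l, (forall c, In c l -> (exists i, J i /\ c = ps i) \/ (exists i, ~ J i /\ c = Neg (ps i))) ->
     exists m, forall z, X z -> mtch e (sq X e psi m) m z -> psat z (conj l)).
  { intros l Hl. destruct (bound_list l R) as [m Hm].
    { intros c Hc. destruct (Hl c Hc) as [[i [Hi ->]]|[i [Hi ->]]].
      - destruct Hi as [k [b [Hk [Hq HJ]]]]. exists k, b. split; auto. left; eauto.
      - destruct he as [_ [he2 _]]. destruct (he2 _ (HDps i)) as [k [b [Hk Hq]]].
        exists k, b. split; auto. right. exists i. split; auto. split; auto.
        destruct (Jb k) eqn:E; auto. exfalso. apply Hi. exists k, b. auto. }
    exists m. intros z Hz Mz. unfold psat. apply sat_conj. intros c Hc.
    destruct (Hm c Hc) as [k [Hk [b [Heb Hor]]]].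
    pose proof (Mz k b Hk Heb) as Hzb. rewrite (sq_stable2 X e psi k m Hk) in Hzb. fold (Jb k) in Hzb.
    destruct Hor as [[i [-> [Hq HJ]]]|[i [-> [Hq HJ]]]].
    - apply (sound_equiv hs Hz Hq). apply Hzb. auto.
    - cbn [sat]. intros Hp. apply (sound_equiv hs Hz Hq) in Hp. apply Hzb in Hp. congruence. }
  destruct Hdec as [[l [Hl Himp]]|[l [Hl Himp]]];
  destruct (Key l Hl) as [m Hm]; destruct (HE m O) as (x & y & Hx & Hy & Mx & My & _ & Hd);
  apply Hd; pose proof (hs _ Himp x Hx) as Ix; pose proof (hs _ Himp y Hy) as Iy;
  unfold psat in Ix, Iy; rewrite sat_Imp in Ix; rewrite sat_Imp in Iy;
  specialize (Ix (Hm x Hx Mx)); specialize (Iy (Hm y Hy My)).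
  - unfold psat; tauto.
  - cbn [sat] in Ix, Iy. unfold psat; tauto.
Qed.

Lemma term_le (a : nat -> R) : (forall k, 0 <= a k) -> ex_series a -> forall k, a k <= Series a.
Proof.
  intros Hp Hs k. rewrite (Series_incr_n a (S k)) by (auto; lia). simpl Init.Nat.pred.
  assert (H1 : 0 <= Series (fun j => a (S k + j)%nat)).
  { assert (Hz : Series (fun _ : nat => 0) = 0).
    { rewrite <- (Series_ext (fun n => 0 * a n)) by (intros; ring).
      rewrite Series_scal_l. ring. }
    rewrite <- Hz. apply Series_le. intros n; split; [lra| apply Hp].
    apply (ex_series_incr_n a (S k)). exact Hs. }
  assert (H2 : a k <= sum_f_R0 a k).
  { destruct k. simpl; lra. rewrite tech5. pose proof (cond_pos_sum a k Hp). lra. }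
  lra.
Qed.

Lemma dk_01 {At Ag} (x y : pmodel At Ag) a : 0 <= dk x y a <= 1.
Proof. unfold dk. destruct (excluded_middle_informative _); lra. Qed.

Lemma list_det {At Ag} L (X : pmodel At Ag -> Prop) D e
  (hs : sound L X) (hD : representative L D) (he : enumeration L D e) (Psi : list (form At Ag)) :
  exists n, forall x y, X x -> X y -> agr e n x y -> forall ps, In ps Psi -> (psat x ps <-> psat y ps).
Proof.
  induction Psi as [|p Psi IH].
  - exists O. intros x y _ _ _ ps [].
  - destruct IH as [n1 H1]. destruct (finite_det _ _ _ _ hs hD he p) as [n2 H2].
    exists (max n1 n2). intros x y Hx Hy Hag ps [<-|Hin].
    + apply H2; auto. apply agr_mono with (max n1 n2); auto; lia.
    + apply H1; auto. apply agr_mono with (max n1 n2); auto; lia.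
Qed.

Theorem proposition34 (At Ag : Type)
  (hAt : countable At) (iAt : inhabited At)
  (hAg : countable Ag) (iAg : inhabited Ag)
  (X : pmodel At Ag -> Prop)
  (hX : forall x, X x -> countable (st (pm x)))
  (L : form At Ag -> Prop) (hL : normal_logic L) (hsound : sound L X)
  (D : form At Ag -> Prop) (hDc : class_closed L D) (hD : representative L D)
  (e : nat -> option (form At Ag)) (he : enumeration L D e)
  (w : form At Ag -> R) (hw : weight L D e w)
  (f : (pmodel At Ag -> Prop) -> (pmodel At Ag -> Prop))
  (hf : forall c, XL X c -> XL X (f c))
  (hclean : clean L X f) :
  forall eps, 0 < eps -> exists delta, 0 < delta /\
    forall x y x' y', X x -> X y -> X x' -> X y' ->
      f (cls X x) = cls X x' -> f (cls X y) = cls X y' ->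
      dw e w x y < delta -> dw e w x' y' < eps.
Proof.
  intros eps Heps.
  destruct hclean as [A [_ [[l pl] [hclo [hdet [hexh Hf]]]]]].
  destruct hw as [hwpos [_ hWs]].
  set (W := fun k => match e k with Some a => w a | None => 0 end) in hWs.
  assert (HWp : forall k, 0 <= W k).
  { intros k. unfold W. destruct (e k) as [a|] eqn:E; [|lra].
    apply Rlt_le, hwpos. exact (proj1 he k a E). }
  pose proof (proj1 (is_series_Reals W (Series W)) (Series_correct W hWs) eps Heps) as [N0 HN0].
  specialize (HN0 N0 (Nat.le_refl _)). unfold Rdist in HN0.
  pose proof (Series_incr_n W (S N0) ltac:(lia) hWs) as Hsplit. simpl Init.Nat.pred in Hsplit.
  assert (Htail : Series (fun k => W (S N0 + k)%nat) < eps).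
  { apply Rabs_def2 in HN0. lra. }
  assert (Hn : forall N, exists n, forall x y s s' (h : psat x (Defs.pre A s)) (h' : psat y (Defs.pre A s')),
     X x -> X y -> des A s -> des A s' -> agr e n x y ->
     forall k b, (k < N)%nat -> e k = Some b -> (psat (upd x A s h) b <-> psat (upd y A s' h') b)).
  { induction N as [|N IH].
    - exists O. intros x y s s0 h h0 _ _ _ _ _ k b Hk; exfalso; inversion Hk.
    - destruct IH as [n1 H1]. destruct (e N) as [ph|] eqn:EN.
      + destruct (upd_det hL hsound pl hdet ph) as [Psi HPsi].
        destruct (list_det _ _ _ _ hsound hD he Psi) as [n2 H2].
        exists (max n1 n2). intros x y s s' h h' Hx Hy Hs Hs' Hag k b Hk Hb.
        destruct (Nat.eq_dec k N) as [->|Hne].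
        * rewrite EN in Hb. injection Hb as <-. apply HPsi; auto.
          apply H2; auto. apply agr_mono with (max n1 n2); auto; lia.
        * apply (H1 x y s s' h h' Hx Hy Hs Hs') with k; auto; [apply agr_mono with (max n1 n2); auto; lia| lia].
      + exists n1. intros x y s s' h h' Hx Hy Hs Hs' Hag k b Hk Hb.
        destruct (Nat.eq_dec k N) as [->|Hne]; [congruence|].
        apply (H1 x y s s' h h' Hx Hy Hs Hs') with k; auto; lia. }
  destruct (Hn (S N0)) as [n Hagr].
  assert (Hdel : forall n, exists delta, 0 < delta /\ forall k b, (k < n)%nat -> e k = Some b -> delta <= w b).
  { induction n0 as [|m [d [Hd Hdm]]].
    - exists 1. split; [lra|]. intros; lia.
    - destruct (e m) as [b|] eqn:Em.
      + assert (Hb : 0 < w b) by (apply hwpos; exact (proj1 he m b Em)).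
        exists (Rmin d (w b)). split; [apply Rmin_glb_lt; auto|].
        intros k b' Hk Hb'. destruct (Nat.eq_dec k m) as [->|Hne].
        * rewrite Em in Hb'. injection Hb' as <-. apply Rmin_r.
        * eapply Rle_trans; [apply Rmin_l|]. apply Hdm with k; auto; lia.
      + exists d. split; auto. intros k b' Hk Hb'.
        destruct (Nat.eq_dec k m) as [->|Hne]; [congruence|]. apply Hdm with k; auto; lia. }
  destruct (Hdel n) as [delta [Hdp Hdn]].
  exists delta. split; auto.
  intros x y x' y' Hx Hy Hx' Hy' Hfx Hfy Hdxy.
  set (term := fun (u v : pmodel At Ag) k => match e k with Some a => w a * dk u v a | None => 0 end).
  assert (Htp : forall u v k, 0 <= term u v k <= W k).
  { intros u v k. unfold term, W. destruct (e k) as [a|] eqn:E; [|lra].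
    assert (0 < w a) by (apply hwpos; exact (proj1 he k a E)).
    pose proof (dk_01 u v a). split; [apply Rmult_le_pos; lra|]. nra. }
  assert (Hts : forall u v, ex_series (term u v)).
  { intros u v. apply (@ex_series_le R_AbsRing R_CompleteNormedModule _ W); [|exact hWs]. intros k. change (norm (term u v k)) with (Rabs (term u v k)).
    rewrite Rabs_pos_eq; apply Htp. }
  assert (Hag : agr e n x y).
  { intros k b Hk Hb. apply NNPP. intros Hd.
    assert (Ht : term x y k = w b).
    { unfold term. rewrite Hb. unfold dk. destruct (excluded_middle_informative _); [contradiction|ring]. }
    pose proof (term_le (term x y) (fun k => proj1 (Htp x y k)) (Hts x y) k) as Hle.
    rewrite Ht in Hle. pose proof (Hdn k b Hk Hb). unfold dw in Hdxy. fold (term x y) in Hdxy. lra. }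
  destruct (hexh x Hx) as [s [Hs h]]. destruct (hexh y Hy) as [s' [Hs' h']].
  destruct (proj1 (Hf x s h x' Hx Hs Hx') Hfx) as [_ Ex].
  destruct (proj1 (Hf y s' h' y' Hy Hs' Hy') Hfy) as [_ Ey].
  assert (Hz : forall k, (k < S N0)%nat -> term x' y' k = 0).
  { intros k Hk. unfold term. destruct (e k) as [b|] eqn:Eb; [|reflexivity].
    unfold dk. destruct (excluded_middle_informative _) as [|Hn']; [ring|].
    exfalso. apply Hn'. rewrite <- Ex, <- Ey. apply (Hagr x y s s' h h' Hx Hy Hs Hs' Hag k); auto. }
  unfold dw. fold (term x' y').
  rewrite (Series_incr_n_aux (term x' y') (S N0) Hz).
  eapply Rle_lt_trans; [|exact Htail].
  apply Series_le. intros k; apply Htp.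
  apply (ex_series_incr_n W (S N0)). exact hWs.
Qed.
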